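(* Let $G$ be a connected graph with $n\ge 2$ vertices. If the maximum degree satisfies $\Delta(G)<n/2$, then $\frac{q(G)}{R(G)}<\frac{n}{\sqrt{n-1}}$.
   Context: All graphs are finite and simple; $\Delta(G)$ is the maximum degree. For a vertex $u$, $d(u)$ is its degree. The Randić index is $R(G)=\sum_{\{u,v\}\in E(G)} \frac{1}{\sqrt{d(u)d(v)}}$. The signless Laplacian is $Q=D+A$ ($D$ the diagonal degree matrix, $A$ the adjacency matrix), and $q(G)$ is its largest eigenvalue. *)

(* Defs.v *)
From HB Require Import structures.
From mathcomp Require Import all_boot all_order all_algebra.
Set Implicit Arguments. Unset Strict Implicit. Unset Printing Implicit Defensive.
Import Order.TTheory GRing.Theory Num.Theory.

Definition simple_graph (n : nat) (e : rel 'I_n) : Prop :=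
  symmetric e /\ irreflexive e.

Definition connected_graph (n : nat) (e : rel 'I_n) : Prop :=
  forall x y : 'I_n, connect e x y.

Definition deg (n : nat) (e : rel 'I_n) (u : 'I_n) : nat := #|[set v | e u v]|.

Definition maxdeg (n : nat) (e : rel 'I_n) : nat := \max_(u : 'I_n) deg e u.

Local Open Scope ring_scope.

Definition randic (R : rcfType) (n : nat) (e : rel 'I_n) : R :=
  \sum_(u : 'I_n) \sum_(v : 'I_n | e u v && (u < v)%N)
     (Num.sqrt ((deg e u)%:R * (deg e v)%:R))^-1.

Definition adjmx (R : rcfType) (n : nat) (e : rel 'I_n) : 'M[R]_n :=
  \matrix_(i, j) (e i j)%:R.

Definition degmx (R : rcfType) (n : nat) (e : rel 'I_n) : 'M[R]_n :=
  diag_mx (\row_i (deg e i)%:R).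

Definition signless_laplacian (R : rcfType) (n : nat) (e : rel 'I_n) : 'M[R]_n :=
  degmx R e + adjmx R e.

Definition largest_eigenvalue (R : rcfType) (n : nat) (A : 'M[R]_n) (q : R) : Prop :=
  eigenvalue A q /\ (forall a : R, eigenvalue A a -> a <= q).

(* Main.v *)
Require Import Defs.
From HB Require Import structures.
From mathcomp Require Import all_boot all_order all_algebra.
From mathcomp Require Import ring lra.
Import Order.TTheory GRing.Theory Num.Theory.
Local Open Scope ring_scope.

Lemma deg_ge1 (n : nat) (e : rel 'I_n) (u : 'I_n) :
  (2 <= n)%N -> connected_graph e -> (1 <= deg e u)%N.
Proof.
move=> n2 conn.
have h0 : (0 < n)%N by apply: leq_trans n2.
have h1 : (1 < n)%N by [].
set y0 : 'I_n := Ordinal h0. set y1 : 'I_n := Ordinal h1.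
have [y yu] : exists y : 'I_n, y != u.
  case: (eqVneq u y0) => [->|nu]; last by exists y0; rewrite eq_sym.
  by exists y1.
have /connectP [p pth ly] := conn u y.
case: p pth ly => [|v p] /=; first by move=> _ yeq; rewrite yeq eqxx in yu.
case/andP=> euv _ _.
by apply/card_gt0P; exists v; rewrite inE.
Qed.

Lemma deg_le (n : nat) (e : rel 'I_n) (u : 'I_n) :
  simple_graph e -> (deg e u <= n.-1)%N.
Proof.
case=> _ irr.
have h : #|[set~ u]| = n.-1 by rewrite cardsC1 card_ord.
rewrite /deg -h; apply: subset_leq_card.
apply/subsetP => v; rewrite !inE; apply: contraTneq => ->.
by rewrite irr.
Qed.

Lemma sum_sym (R : rcfType) (n : nat) (e : rel 'I_n) (f : 'I_n -> R) :
  simple_graph e ->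
  \sum_(u : 'I_n) \sum_(v : 'I_n | e u v && (u < v)%N) (f u + f v) =
  \sum_(u : 'I_n) \sum_(v : 'I_n | e u v) f u.
Proof.
case=> sym irr.
have E1 : \sum_(u : 'I_n) \sum_(v : 'I_n | e u v && (u < v)%N) f v =
          \sum_(u : 'I_n) \sum_(v : 'I_n | e u v && (v < u)%N) f u.
  under eq_bigr do rewrite big_mkcond.
  rewrite exchange_big /=.
  apply: eq_bigr => u _; rewrite [RHS]big_mkcond; apply: eq_bigr => v _.
  by rewrite sym.
under eq_bigr do rewrite big_split /=.
rewrite big_split /= E1 -big_split /=.
apply: eq_bigr => u _.
rewrite [in RHS](bigID (fun v : 'I_n => (u < v)%N)) /=.
congr (_ + _).
apply: eq_bigl => v.
case euv: (e u v) => //=.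
rewrite -leqNgt ltn_neqAle.
case: (eqVneq v u) => [vu|] //=; first by rewrite vu irr in euv.
move=> nvu; suff -> : (nat_of_ord v != nat_of_ord u) by [].
by [].
Qed.
Lemma edge_ineq (R : rcfType) (n a b : nat) :
  (1 <= a)%N -> (a <= n.-1)%N -> (1 <= b)%N -> (b <= n.-1)%N ->
  Num.sqrt ((n - 1)%:R : R) / n%:R * (a%:R^-1 + b%:R^-1)
    <= (Num.sqrt (a%:R * b%:R))^-1.
Proof.
move=> a1 an b1 bn.
have n1 : (1 <= n)%N by apply: leq_trans a1 (leq_trans an (leq_pred n)).
have hn : n%:R = (n - 1)%:R + 1 :> R by rewrite natr1 subn1 prednK.
set c : R := (n - 1)%:R.
have ha : 1 <= a%:R :> R by rewrite ler1n.
have hb : 1 <= b%:R :> R by rewrite ler1n.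
have hac : a%:R <= c by rewrite /c ler_nat subn1.
have hbc : b%:R <= c by rewrite /c ler_nat subn1.
set A : R := a%:R. set B : R := b%:R.
have c0 : 0 <= c by lra.
set t := Num.sqrt c. set s := Num.sqrt (A * B).
have tt : t * t = c by rewrite -expr2 sqr_sqrtr.
have ss : s * s = A * B by rewrite -expr2 sqr_sqrtr //; nra.
have t0 : 0 <= t by exact: sqrtr_ge0.
have s0 : 0 < s by rewrite sqrtr_gt0; nra.
have key : t * (A + B) <= n%:R * s.
  have sq : (t * (A + B)) ^+ 2 <= (n%:R * s) ^+ 2.
    rewrite !exprMn !sqr_sqrtr //; last by nra.
    rewrite hn.
    have h1 : 0 <= c * A - B by nra.
    have h2 : 0 <= c * B - A by nra.
    have := mulr_ge0 h1 h2. nra.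
  rewrite -ler_sqrt in sq; last by apply: exprn_ge0; rewrite hn; nra.
  rewrite !sqrtr_sqr in sq.
  rewrite (ger0_norm _) in sq; last by nra.
  rewrite (ger0_norm _) in sq; last by rewrite hn; nra.
  done.
have An : A != 0 by rewrite /A pnatr_eq0 -lt0n.
have Bn : B != 0 by rewrite /B pnatr_eq0 -lt0n.
have Nn : n%:R != 0 :> R by rewrite pnatr_eq0 -lt0n.
have sn : s != 0 by rewrite gt_eqF.
have E1 : t / n%:R * (A^-1 + B^-1) = (t * (A + B)) * (n%:R * (A * B))^-1.
  by field; rewrite Nn An Bn.
have E2 : s^-1 = (n%:R * s) * (n%:R * (A * B))^-1.
  rewrite -ss. field. by rewrite Nn sn.
rewrite E1 E2; apply: ler_wpM2r => //.
rewrite invr_ge0; rewrite hn; nra.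
Qed.

Lemma randic_ge (R : rcfType) (n : nat) (e : rel 'I_n) :
  (2 <= n)%N -> simple_graph e -> connected_graph e ->
  Num.sqrt ((n - 1)%:R : R) <= randic R e.
Proof.
move=> n2 sg conn.
set k : R := Num.sqrt ((n - 1)%:R : R) / n%:R.
pose f (u : 'I_n) : R := ((deg e u)%:R)^-1.
have Nn : n%:R != 0 :> R by rewrite pnatr_eq0 -lt0n; apply: leq_trans n2.
have -> : Num.sqrt ((n - 1)%:R : R) = k * n%:R by rewrite /k mulfVK.
have E : n%:R = \sum_(u : 'I_n) \sum_(v : 'I_n | e u v) f u :> R.
  rewrite -[n in LHS]card_ord -sumr_const.
  apply: eq_bigr => u _.
  rewrite sumr_const.
  have -> : #|[pred v | e u v]| = deg e u by apply: eq_card => v; rewrite inE.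
  rewrite /f -[_ *+ _]mulr_natr mulVf // pnatr_eq0 -lt0n.
  exact: deg_ge1.
rewrite E -sum_sym // mulr_sumr /randic; apply: ler_sum => u _.
rewrite mulr_sumr; apply: ler_sum => v /andP [euv _].
apply: edge_ineq; try apply: deg_ge1 => //; apply: deg_le => //.
Qed.
Lemma q_le (R : rcfType) (n : nat) (e : rel 'I_n) (q : R) :
  (0 < n)%N -> simple_graph e -> eigenvalue (signless_laplacian R e) q ->
  q <= (2 * maxdeg e)%:R.
Proof.
move=> n0 [sym irr] /eigenvalueP [v hv vn0].
set i0 : 'I_n := Ordinal n0.
case: (@arg_maxP _ _ _ i0 predT (fun j => `|v 0 j|) isT) => i _ imax.
have [j vj] : exists j, v 0 j != 0.
  apply/existsP; apply: contraNT vn0; rewrite negb_exists => /forallP h.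
  by apply/eqP/rowP => j; rewrite mxE; apply/eqP; rewrite -[_ == _]negbK h.
have vi : 0 < `|v 0 i| by apply: lt_le_trans (imax j isT); rewrite normr_gt0.
have := congr1 (fun M : 'M[R]_(1,n) => M 0 i) hv; rewrite !mxE /=.
under eq_bigr do rewrite /signless_laplacian /degmx /adjmx !mxE.
move=> H.
have Hd : \sum_(k < n) v 0 k * ((deg e k)%:R *+ (k == i)) = v 0 i * (deg e i)%:R.
  rewrite (bigD1 i) //= eqxx mulr1n big1 ?addr0 // => k /negbTE ->.
  by rewrite mulr0n mulr0.
have Hdeg : \sum_(k < n) (e k i)%:R = (deg e i)%:R :> R.
  rewrite -natr_sum; congr (_%:R).
  transitivity (\sum_(k < n | e i k) 1)%N.
    by rewrite [RHS]big_mkcond /=; apply: eq_bigr => k _; rewrite sym; case: (e i k).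
  by rewrite sum1dep_card.
move: H; under eq_bigr do rewrite mulrDr; rewrite big_split /= Hd => H.
have Hb : `|\sum_(k < n) v 0 k * (e k i)%:R| <= `|v 0 i| * (deg e i)%:R.
  rewrite -Hdeg mulr_sumr; apply: le_trans (ler_norm_sum _ _ _) _.
  apply: ler_sum => k _; rewrite normrM (ger0_norm (ler0n _ _)).
  by apply: ler_wpM2r; [exact: ler0n | exact: imax].
have Hq : `|q| * `|v 0 i| <= `|v 0 i| * (2 * deg e i)%:R.
  rewrite -normrM -H natrM.
  apply: le_trans (ler_normD _ _) _.
  rewrite normrM (ger0_norm (ler0n _ _)).
  lra.
have Hq2 : `|q| <= (2 * deg e i)%:R.
  by rewrite -(ler_pM2r vi) [X in _ <= X]mulrC.
apply: le_trans (ler_norm _) (le_trans Hq2 _).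
rewrite ler_nat leq_mul2l /= /maxdeg. exact: leq_bigmax.
Qed.

Theorem lemma3p4 (R : rcfType) (n : nat) (e : rel 'I_n) (q : R) :
  (2 <= n)%N ->
  simple_graph e ->
  connected_graph e ->
  (maxdeg e * 2 < n)%N ->
  largest_eigenvalue (signless_laplacian R e) q ->
  q / randic R e < n%:R / Num.sqrt (n - 1)%:R.
Proof.
move=> n2 sg conn hmax [eig _].
have n0 : (0 < n)%N by apply: leq_trans n2.
have hq := @q_le R n e q n0 sg eig.
have hR := @randic_ge R n e n2 sg conn.
set s := Num.sqrt ((n - 1)%:R : R) in hR *.
set r := randic R e in hR *.
have s0 : 0 < s by rewrite sqrtr_gt0 ltr0n subn_gt0.
have r0 : 0 < r by apply: lt_le_trans hR.
have qn : q < n%:R by apply: le_lt_trans hq _; rewrite ltr_nat mulnC.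
have nn : 0 <= n%:R :> R by exact: ler0n.
rewrite ltr_pdivrMr // mulrAC ltr_pdivlMr //.
nra.
Qed.
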